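(* Let $\beta$ be a constant, $K$ a smooth positive function with antiderivative $J(u)=\int K(u)\,du$ assumed invertible, and $C(u)=\beta K(u)$. For arbitrary constants $C_0,C_1$, the functions $$u(z,t)=J^{-1}\!\left(\frac{C_0}{z\sqrt{t}}\exp\!\left(-\frac{\beta z^2}{4t}\right)\right)\qquad\text{and}\qquad u(z,t)=J^{-1}\!\left(\frac{C_1}{z}\right)$$ are solutions (for $z>0$, $t>0$, wherever the arguments lie in the range of $J$) of the equation $C(u)u_t=z^{-2}\left(K(u)z^{2}u_z\right)_z$. *)

(* Defs.v *)
From Stdlib Require Import Reals.
From Coquelicot Require Import Coquelicot.
Open Scope R_scope.

Definition smooth_fun (K : R -> R) : Prop := forall (n : nat) (x : R), ex_derive_n K n x.

Definition J_antideriv_of (J K : R -> R) : Prop := forall u : R, is_derive J u (K u).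

Definition solves_eq_at (beta : R) (K : R -> R) (u : R -> R -> R) (z t : R) : Prop :=
  ex_derive (fun s => u z s) t /\
  ex_derive (fun x => u x t) z /\
  ex_derive (fun y => K (u y t) * y ^ 2 * Derive (fun x => u x t) y) z /\
  beta * K (u z t) * Derive (fun s => u z s) t
  = / z ^ 2 * Derive (fun y => K (u y t) * y ^ 2 * Derive (fun x => u x t) y) z.

Definition in_range_of (J : R -> R) (y : R) : Prop := exists v : R, J v = y.

(* Main.v *)
Require Import Defs.
From Stdlib Require Import Reals.
From Coquelicot Require Import Coquelicot.
From Stdlib Require Import Lra Ranalysis5.
Open Scope R_scope.

Section S.
Variables (K J Jinv : R -> R).
Hypothesis HKpos : forall x, 0 < K x.
Hypothesis HJ : forall u, is_derive J u (K u).
Hypothesis HJinv : forall v, Jinv (J v) = v.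

Lemma J_incr : forall x y, x < y -> J x < J y.
Proof.
  intros x y H. apply (incr_function J m_infty p_infty K); simpl; auto.
  intros; apply HKpos.
Qed.

Lemma J_cont : continuity J.
Proof.
  intros x. apply continuity_pt_filterlim. apply (ex_derive_continuous (V:=R_NormedModule)).
  eexists; apply HJ.
Qed.

Lemma range_box : forall v0, forall y, J (v0 - 1) <= y <= J (v0 + 1) ->
   v0 - 1 <= Jinv y <= v0 + 1 /\ J (Jinv y) = y.
Proof.
  intros v0 y Hy.
  destruct (IVT_gen J (v0 - 1) (v0 + 1) y J_cont) as [x [Hx Hxy]].
  { rewrite Rmin_left, Rmax_right; [lra| |]; left; apply J_incr; lra. }
  rewrite Rmin_left, Rmax_right in Hx by lra.
  subst y. rewrite HJinv. auto.
Qed.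

Lemma Jinv_deriv : forall v0, is_derive Jinv (J v0) (/ K v0).
Proof.
  intros v0.
  assert (Hlt : J (v0 - 1) < J (v0 + 1)) by (apply J_incr; lra).
  assert (Prf : forall a, Jinv (J (v0 - 1)) <= a <= Jinv (J (v0 + 1)) -> derivable_pt J a).
  { intros a _. exists (K a). apply is_derive_Reals, HJ. }
  assert (Hc : continuity_pt Jinv (J v0)).
  { apply (continuity_pt_recip_interv J Jinv (v0 - 1) (v0 + 1)).
    - lra.
    - intros; apply J_incr; auto.
    - intros x H1 H2. unfold comp, id. apply (range_box v0); lra.
    - intros x H1 H2. apply (range_box v0); lra.
    - intros; apply J_cont.
    - split; apply J_incr; lra. }
  assert (Hin : Jinv (J (v0 - 1)) <= Jinv (J v0) <= Jinv (J (v0 + 1))).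
  { rewrite !HJinv; lra. }
  pose proof (derivable_pt_lim_recip_interv J Jinv (J (v0 - 1)) (J (v0 + 1)) (J v0)
     Prf Hc Hlt) as D.
  assert (Hv : J (v0 - 1) < J v0 < J (v0 + 1)) by (split; apply J_incr; lra).
  specialize (D Hv Hin).
  assert (Hd : derive_pt J (Jinv (J v0)) (Prf (Jinv (J v0)) Hin) = K v0).
  { apply derive_pt_eq_0. rewrite HJinv. apply is_derive_Reals, HJ. }
  rewrite Hd in D.
  apply is_derive_Reals.
  replace (/ K v0) with (1 / K v0) by (field; apply Rgt_not_eq, HKpos).
  apply D.
  - intros x Hx. unfold comp, id. apply (range_box v0); lra.
  - apply Rgt_not_eq, HKpos.
Qed.

Lemma generic (beta : R) (w : R -> R -> R) z t wt (wz : R -> R) d :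
 0 < z ->
 is_derive (fun s => w z s) t wt ->
 (forall y, 0 < y -> is_derive (fun x => w x t) y (wz y)) ->
 is_derive (fun y => y^2 * wz y) z d ->
 in_range_of J (w z t) ->
 beta * wt = / z^2 * d ->
 solves_eq_at beta K (fun z t => Jinv (w z t)) z t.
Proof.
  intros Hz Ht Hzd Hd [v0 Hv0] Heq.
  assert (Hloc : locally z (fun y => 0 < y /\ J (v0 - 1) < w y t < J (v0 + 1))).
  { assert (Hc : continuous (fun x => w x t) z).
    { apply (ex_derive_continuous (V:=R_NormedModule)). eexists; apply Hzd; auto. }
    apply filter_and.
    - apply (locally_interval _ z 0 p_infty); simpl; auto.
    - apply (Hc (fun r => J (v0 - 1) < r < J (v0 + 1))). apply (locally_interval _ (w z t) (J (v0 - 1)) (J (v0 + 1))); simpl.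
      + rewrite <- Hv0; apply J_incr; lra.
      + rewrite <- Hv0; apply J_incr; lra.
      + intros; split; auto. }
  assert (Hder : forall y, 0 < y /\ J (v0 - 1) < w y t < J (v0 + 1) ->
     is_derive (fun x => Jinv (w x t)) y (wz y * / K (Jinv (w y t)))).
  { intros y [Hy Hr].
    destruct (range_box v0 (w y t)) as [_ HJJ]; [lra|].
    pose proof (Jinv_deriv (Jinv (w y t))) as D. rewrite HJJ in D.
    apply (is_derive_comp Jinv (fun x => w x t) y _ _ D (Hzd y Hy)). }
  assert (Hz0 : 0 < z /\ J (v0 - 1) < w z t < J (v0 + 1)).
  { split; auto. rewrite <- Hv0; split; apply J_incr; lra. }
  assert (Htd : is_derive (fun s => Jinv (w z s)) t (wt * / K (Jinv (w z t)))).
  { pose proof (Jinv_deriv v0) as D. rewrite Hv0 in D. rewrite <- Hv0, HJinv.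
    apply (is_derive_comp Jinv (fun s => w z s) t _ _ D Ht). }
  assert (H3 : is_derive (fun y => K (Jinv (w y t)) * y ^ 2 * Derive (fun x => Jinv (w x t)) y) z d).
  { apply (is_derive_ext_loc (fun y => y^2 * wz y)); auto.
    refine (filter_imp _ _ _ Hloc). intros y Hy. cbv beta.
    rewrite (is_derive_unique (fun x : R => Jinv (w x t)) y _ (Hder y Hy)).
    assert (E : K (Jinv (w y t)) * y ^ 2 * (wz y * / K (Jinv (w y t))) = y ^ 2 * wz y) by (field; apply Rgt_not_eq, HKpos). rewrite E. reflexivity. }
  split; [eexists; apply Htd|].
  split; [eexists; apply Hder; auto|].
  split; [eexists; apply H3|].
  rewrite (is_derive_unique (fun s : R => Jinv (w z s)) t _ Htd).
  rewrite (is_derive_unique (fun y : R => K (Jinv (w y t)) * y ^ 2 * Derive (fun x : R => Jinv (w x t)) y) z _ H3).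
  rewrite <- Heq. field. apply Rgt_not_eq, HKpos.
Qed.
End S.

Theorem mainTheorem11 (beta : R) (K J Jinv : R -> R)
  (HKs : smooth_fun K) (HKpos : forall x, 0 < K x)
  (HJ : J_antideriv_of J K) (HJinv : forall v, Jinv (J v) = v)
  (C0 C1 : R) :
  (forall z t, 0 < z -> 0 < t ->
     in_range_of J (C0 / (z * sqrt t) * exp (- (beta * z ^ 2) / (4 * t))) ->
     solves_eq_at beta K
       (fun z' t' => Jinv (C0 / (z' * sqrt t') * exp (- (beta * z' ^ 2) / (4 * t')))) z t)
  /\
  (forall z t, 0 < z -> 0 < t ->
     in_range_of J (C1 / z) ->
     solves_eq_at beta K (fun z' t' => Jinv (C1 / z')) z t).
Proof.
  split.
  - intros z t Hz Ht Hr.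
    pose proof (sqrt_lt_R0 t Ht) as Hs.
    pose proof (sqrt_sqrt t (Rlt_le _ _ Ht)) as Hss.
    apply (generic K J Jinv HKpos HJ HJinv beta
      (fun z' t' => C0 / (z' * sqrt t') * exp (- (beta * z' ^ 2) / (4 * t'))) z t
      (C0 * exp (- (beta * z ^ 2) / (4 * t)) / (z * sqrt t) * (- / (2 * t) + beta * z ^ 2 / (4 * t ^ 2)))
      (fun y => - C0 * exp (- (beta * y ^ 2) / (4 * t)) / sqrt t * (/ y ^ 2 + beta / (2 * t)))
      (- C0 * exp (- (beta * z ^ 2) / (4 * t)) / sqrt t * (beta * z / (2 * t) - beta ^ 2 * z ^ 3 / (4 * t ^ 2))));
      auto.
    + auto_derive.
      * repeat split; try lra. apply Rgt_not_eq, Rmult_lt_0_compat; lra.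
      * replace (- (beta * (z * (z * 1))) * / (4 * t)) with (- (beta * z ^ 2) / (4 * t)) by (unfold Rdiv; ring).
        set (E := exp _). remember (sqrt t) as s. rewrite <- Hss. field. lra.
    + intros y Hy. auto_derive.
      * repeat split; try lra; try (apply Rgt_not_eq; repeat apply Rmult_lt_0_compat; lra).
      * replace (- (beta * (y * (y * 1))) * / (4 * t)) with (- (beta * y ^ 2) / (4 * t)) by (unfold Rdiv; ring).
        set (E := exp _). remember (sqrt t) as s. field. lra.
    + auto_derive.
      * repeat split; try lra; try (apply Rgt_not_eq; repeat apply Rmult_lt_0_compat; lra).
      * replace (- (beta * (z * (z * 1))) * / (4 * t)) with (- (beta * z ^ 2) / (4 * t)) by (unfold Rdiv; ring).
        set (E := exp _). remember (sqrt t) as s. field. lra.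
    + field. lra.
  - intros z t Hz Ht Hr.
    apply (generic K J Jinv HKpos HJ HJinv beta (fun z' t' => C1 / z') z t 0
      (fun y => - C1 / y ^ 2) 0); auto.
    + apply (is_derive_const (K:=R_AbsRing) (V:=R_NormedModule)).
    + intros y Hy. auto_derive. { repeat split; lra. } field. lra.
    + auto_derive. { apply Rgt_not_eq; repeat apply Rmult_lt_0_compat; lra. } field. lra.
    + ring.
Qed.
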